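(* Let $\lambda=(\lambda_1,\dots,\lambda_n)\in\mathbb{R}^n$ with $\lambda_1+\dots+\lambda_n>0$, and suppose there is no partition $\{I_1,I_2\}$ of $\{1,\dots,n\}$ with $s_{I_1}(\lambda)>0$ and $s_{I_2}(\lambda)>0$. Then $|\mathfrak{S}(\lambda)|=(n-1)!$.
   Context: $s_J(\lambda)=\sum_{i\in J}\lambda_i$. $\mathfrak{S}_n$ acts on $\mathbb{R}^n$ by $\sigma(\lambda)=(\lambda_{\sigma^{-1}(1)},\dots,\lambda_{\sigma^{-1}(n)})$. For $\mu\in\mathbb{R}^n$, $\mu>0$ means $\mu_1+\dots+\mu_i>0$ for all $i$. $\mathfrak{S}(\lambda)=\{\sigma\in\mathfrak{S}_n:\sigma(\lambda)>0\}$. *)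

(* Defs.v *)
From mathcomp Require Import all_boot all_order all_algebra all_fingroup.
Set Implicit Arguments. Unset Strict Implicit. Unset Printing Implicit Defensive.
Import Order.TTheory GRing.Theory Num.Theory.
Local Open Scope ring_scope.

(* Indices {1,...,n} are represented by 'I_n = {0,...,n-1}. *)

Definition sJ (R : realFieldType) (n : nat) (J : {set 'I_n}) (lam : 'I_n -> R) : R :=
  \sum_(i in J) lam i.

Definition perm_act (R : realFieldType) (n : nat) (s : 'S_n) (lam : 'I_n -> R) : 'I_n -> R :=
  fun i => lam ((s^-1)%g i).

Definition pos_vec (R : realFieldType) (n : nat) (mu : 'I_n -> R) : bool :=
  [forall i : 'I_n, 0 < \sum_(j < n | (j <= i)%N) mu j].

Definition Sgood (R : realFieldType) (n : nat) (lam : 'I_n -> R) : {set 'S_n} :=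
  [set s : 'S_n | pos_vec (perm_act s lam)].

(* Main.v *)
Require Import Defs.
From mathcomp Require Import all_boot all_order all_algebra all_fingroup.
From mathcomp Require Import lra zify.
Import Order.TTheory GRing.Theory Num.Theory.
Local Open Scope ring_scope.

Section Core.
Variable R : realFieldType.
Variable m : nat.
Local Notation n := m.+1.
Variable a : 'I_n -> R.

Definition bb (t : nat) : R := a (inord (t %% n)).
Definition QQ (t : nat) : R := \sum_(i < t) bb i.
Definition goodrot (k : 'I_n) := pos_vec (fun i : 'I_n => a (i + k)).

Lemma bb_ord (i : 'I_n) : bb i = a i.
Proof. by rewrite /bb modn_small // inord_val. Qed.

Lemma bb_add (i k : 'I_n) : a (i + k) = bb (i + k)%N.
Proof.
rewrite /bb; congr a; apply: val_inj; rewrite /= inordK //.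
by rewrite ltn_pmod.
Qed.

Lemma QQ_n : QQ n = \sum_(i < n) a i.
Proof. by apply: eq_bigr => i _; rewrite bb_ord. Qed.

Lemma QQ_per t : QQ (t + n) = QQ t + QQ n.
Proof.
elim: t => [|t IH]; first by rewrite add0n /QQ big_ord0 add0r.
rewrite addSn /QQ big_ord_recr /= -/(QQ (t + n)) IH big_ord_recr /=.
have -> : bb (t + n) = bb t by rewrite /bb modnDr.
rewrite -/(QQ t) -/(QQ n); lra.
Qed.

Lemma QQ_shift k t : QQ (k + t) = QQ k + \sum_(i < t) bb (i + k).
Proof.
elim: t => [|t IH]; first by rewrite addn0 big_ord0 addr0.
by rewrite addnS /QQ big_ord_recr /= -/(QQ (k + t)) IH big_ord_recr /= addrA addnC.
Qed.

Lemma goodrotE (k : 'I_n) : goodrot k <-> forall j, (j < n)%N -> QQ k < QQ (k + j.+1).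
Proof.
split.
- move=> /forallP H j jn; have := H (Ordinal jn).
  rewrite (eq_bigr (fun i : 'I_n => bb (i + k)%N)); last by move=> i _; rewrite bb_add.
  have E : \sum_(i < n | (i <= j)%N) bb (i + k)%N = \sum_(i < j.+1) bb (i + k)%N.
    by rewrite (big_ord_widen n (fun i => bb (i + k)%N) jn).
  rewrite /= E QQ_shift; lra.
- move=> H; apply/forallP => j; have := H j (ltn_ord j).
  rewrite (eq_bigr (fun i : 'I_n => bb (i + k)%N)); last by move=> i _; rewrite bb_add.
  have E : \sum_(i < n | (i <= j)%N) bb (i + k)%N = \sum_(i < j.+1) bb (i + k)%N.
    by rewrite (big_ord_widen n (fun i => bb (i + k)%N) (ltn_ord j)).
  rewrite /= E QQ_shift; lra.
Qed.

Lemma lastmin (F : nat -> R) N : exists k, [/\ (k <= N)%N,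
   (forall i, (i <= N)%N -> F k <= F i) & (forall i, (k < i)%N -> (i <= N)%N -> F k < F i)].
Proof.
elim: N => [|N [k [kN H1 H2]]].
  exists 0%N; split => //; first by move=> i; rewrite leqn0 => /eqP ->.
  by move=> i ? ?; lia.
case: (leP (F N.+1) (F k)) => HF.
- exists N.+1; split => //.
  + move=> i; rewrite leq_eqVlt => /orP [/eqP -> //|iN].
    exact: le_trans HF (H1 _ iN).
  + by move=> i ? ?; lia.
- exists k; split; first by apply: leqW.
  + move=> i; rewrite leq_eqVlt => /orP [/eqP ->|iN]; first exact: ltW.
    exact: H1.
  + move=> i ki; rewrite leq_eqVlt => /orP [/eqP ->|iN]; first by [].
    exact: H2.
Qed.

Lemma exists_good : 0 < QQ n -> exists k, goodrot k.
Proof.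
move=> Hpos; have [k [km H1 H2]] := lastmin QQ m.
have kn : (k < n)%N by [].
exists (Ordinal kn); apply/goodrotE => j jn /=.
case: (leqP (k + j.+1) m) => Ht.
- by apply: H2 => //; rewrite addnS ltnS leq_addr.
- have -> : (k + j.+1 = (k + j.+1 - n) + n)%N by rewrite subnK.
  rewrite QQ_per.
  have : QQ k <= QQ (k + j.+1 - n) by apply: H1; lia.
  lra.
Qed.

Lemma sum_lt t : (t <= n)%N -> \sum_(i < n | (i < t)%N) a i = QQ t.
Proof.
move=> tn; rewrite /QQ (big_ord_widen _ bb tn).
by apply: eq_bigr => i _; rewrite bb_ord.
Qed.

Lemma uniq_good_lt (k l : 'I_n) : goodrot k -> goodrot l -> (k < l)%N ->
  exists J : {set 'I_n}, 0 < \sum_(i in J) a i /\ 0 < \sum_(i in ~: J) a i.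
Proof.
move=> /goodrotE Hk /goodrotE Hl kl; have lo := ltn_ord l; have ko := ltn_ord k.
have h1 := Hk (l - k - 1)%N ltac:(lia).
have h2 := Hl (n + k - l - 1)%N ltac:(lia).
have e1 : (k + (l - k - 1).+1 = l)%N by lia.
have e2 : (l + (n + k - l - 1).+1 = k + n)%N by lia.
rewrite e1 in h1; rewrite e2 QQ_per in h2.
pose J := [set i : 'I_n | (k <= i < l)%N].
have E : \sum_(i < n | (i < l)%N) a i = \sum_(i < n | (i < k)%N) a i + \sum_(i in J) a i.
  rewrite (bigID (fun i : 'I_n => (i < k)%N)) /=; congr (_ + _); apply: eq_bigl => i; rewrite ?inE.
    by case: (ltnP i k) => H; rewrite ?andbT ?andbF //; apply: ltn_trans H kl.
  by case: (ltnP i k) => H; rewrite ?andbT ?andbF.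
have HJ : \sum_(i in J) a i = QQ l - QQ k.
  move: E; rewrite !sum_lt //; [lra | exact: ltnW | exact: ltnW].
have HC : \sum_(i in ~: J) a i = QQ n - \sum_(i in J) a i.
  rewrite QQ_n (bigID (fun i => i \in J) predT) /=.
  have -> : \sum_(i < n | true && ~~ (i \in J)) a i = \sum_(i in ~: J) a i.
    by apply: eq_bigl => i; rewrite [in RHS]inE.
  lra.
exists J; split; first lra.
rewrite HC HJ; lra.
Qed.

Lemma uniq_good (k l : 'I_n) : goodrot k -> goodrot l -> k != l ->
  exists J : {set 'I_n}, 0 < \sum_(i in J) a i /\ 0 < \sum_(i in ~: J) a i.
Proof.
move=> Hk Hl kl; case: (ltngtP k l) => H.
- exact: (@uniq_good_lt k l Hk Hl H).
- have [J [H1 H2]] := @uniq_good_lt l k Hl Hk H.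
  by exists (~: J); rewrite setCK.
- by move: kl; rewrite (val_inj H) eqxx.
Qed.

End Core.

Lemma pos_vec_ext (R : realFieldType) n (f g : 'I_n -> R) : f =1 g -> pos_vec f = pos_vec g.
Proof.
move=> fg; apply: eq_forallb => i; congr (0 < _); apply: eq_bigr => j _; exact: fg.
Qed.

Lemma sum_perm_pred (R : realFieldType) n (lam : 'I_n -> R) (f : 'S_n) (P : pred 'I_n) :
  \sum_(i | P ((f^-1)%g i)) lam i = \sum_(i | P i) lam (f i).
Proof.
rewrite (reindex_inj (@perm_inj _ f)) /=.
by apply: eq_bigl => i; rewrite permK.
Qed.

Lemma transfer (R : realFieldType) n (lam : 'I_n -> R) (f : 'S_n) :
  (exists J : {set 'I_n}, 0 < \sum_(i in J) lam (f i) /\ 0 < \sum_(i in ~: J) lam (f i)) ->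
  (exists I1 I2 : {set 'I_n},
       [/\ I1 != set0, I2 != set0, I1 :&: I2 = set0 & I1 :|: I2 = setT] /\
       0 < sJ I1 lam /\ 0 < sJ I2 lam).
Proof.
move=> [J [H1 H2]].
pose I1 := [set i | (f^-1)%g i \in J].
have E1 : sJ I1 lam = \sum_(i in J) lam (f i).
  rewrite /sJ -(@sum_perm_pred R n lam f (fun i => i \in J)).
  by apply: eq_bigl => i; rewrite inE.
have E2 : sJ (~: I1) lam = \sum_(i in ~: J) lam (f i).
  rewrite /sJ -(@sum_perm_pred R n lam f (fun i => i \in ~: J)).
  by apply: eq_bigl => i; rewrite !inE.
exists I1, (~: I1); split; last by rewrite E1 E2.
split; [| |exact: setICr|exact: setUCr].
- apply/eqP => H; move: H1; rewrite -E1 H /sJ big_set0 ltxx //.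
- apply/eqP => H; move: H2; rewrite -E2 H /sJ big_set0 ltxx //.
Qed.

Section Rot.
Variable m : nat.
Local Notation n := m.+1.

Lemma rot_inj (s : 'S_n) (k : 'I_n) : injective (fun i : 'I_n => (s^-1)%g (i + k)).
Proof. by move=> i j /perm_inj /addIr. Qed.

Definition rot (k : 'I_n) (s : 'S_n) : 'S_n := ((perm (@rot_inj s k))^-1)%g.

Lemma rotinv k s i : ((rot k s)^-1)%g i = (s^-1)%g (i + k).
Proof. by rewrite /rot invgK permE. Qed.
End Rot.

Theorem mainTheorem13 (R : realFieldType) (n : nat) (lam : 'I_n -> R) :
  0 < \sum_(i < n) lam i ->
  ~ (exists I1 I2 : {set 'I_n},
       [/\ I1 != set0, I2 != set0, I1 :&: I2 = set0 & I1 :|: I2 = setT] /\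
       0 < sJ I1 lam /\ 0 < sJ I2 lam) ->
  #|Sgood lam| = (n.-1)`!.
Proof.
case: n lam => [|m] lam Hs Hnp; first by move: Hs; rewrite big_ord0 ltxx.
pose A := Sgood lam.
pose aa (s : 'S_m.+1) := fun i => lam ((s^-1)%g i).
have Hsum s : @QQ R m (aa s) m.+1 = \sum_(i < m.+1) lam i.
  rewrite (@QQ_n R m) /aa; symmetry; exact: (reindex_inj (@perm_inj _ (s^-1)%g)).
have memA s : (s \in A) = pos_vec (aa s) by rewrite inE.
have memrot k s : (@rot m k s \in A) = @goodrot R m (aa s) k.
  by rewrite memA /goodrot; apply: pos_vec_ext => i; rewrite /aa rotinv.
have good0 s : s \in A -> @goodrot R m (aa s) 0.
  by rewrite memA /goodrot => H; move: H; apply: eq_ind; apply: pos_vec_ext => i; rewrite addr0.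
pose D := setX A [set: 'I_m.+1].
pose f := fun p : 'S_m.+1 * 'I_m.+1 => @rot m p.2 p.1.
have finj : {in D &, injective f}.
  move=> [s k] [r l]; rewrite !inE /= !andbT => sA rA /= E.
  have E2 : @rot m k s = @rot m l r := E.
  have E' i : (s^-1)%g (i + k) = (r^-1)%g (i + l) by rewrite -!rotinv E2.
  have kl : k = l.
    apply: subr0_eq; apply/eqP; apply/negPn/negP => Hne.
    apply: Hnp; apply: (@transfer R m.+1 lam (s^-1)%g).
    apply: (@uniq_good R m (aa s) 0 (k - l)).
    - by apply: good0; rewrite memA; exact: sA.
    2: by rewrite eq_sym.
    rewrite /goodrot; move: rA; apply: eq_ind; apply: pos_vec_ext => i.
    rewrite /aa /perm_act -[i in RHS](subrK l) -E'.
    by rewrite -addrA [- l + k]addrC.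
  subst l; congr (_, _).
  apply: invg_inj; apply/permP => i.
  by rewrite -[i](subrK k) E'.
have fsurj : f @: D = [set: 'S_m.+1].
  apply/setP => t; rewrite inE; apply/imsetP.
  have [k Hk] := @exists_good R m (aa t) ltac:(by rewrite Hsum).
  exists (@rot m k t, - k).
    by rewrite /D in_setX memrot in_setT andbT.
  rewrite /f /=; apply: invg_inj; apply/permP => i.
  by rewrite !rotinv subrK.
have := card_in_imset finj; rewrite fsurj cardsX cardsT card_ord cardsT card_Sn factS /=.
by move=> H; apply/eqP; rewrite -(eqn_pmul2r (ltn0Sn m)) -H mulnC.
Qed.
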